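(* Let $\mathcal{L}$ be a triangulation with branching structure of a closed 3-manifold $\mathcal{M}^3$, carrying three copies of the $\mathbb{Z}_2$ toric code as described in the context. Let $\alpha_2$ be a 2-cycle of $\mathcal{L}$ (a set of triangles forming a $\mathbb{Z}_2$-cycle) and let $i\neq j\in\{1,2,3\}$. Define $$U'_{i,j}(\alpha_2)=\prod_{[v_0v_1v_2]\in\alpha_2}\mathrm{CZ}\big(q^{(i)}_{[v_0v_1]},q^{(j)}_{[v_1v_2]}\big)=(-1)^{\int_{\alpha_2}a^{(i)}\cup a^{(j)}}.$$ Then $U'_{i,j}(\alpha_2)$ preserves the code space, and on it $$U'_{i,j}(\alpha_2)=\prod_{\beta^1,\gamma^1\in B^1}\overline{\mathrm{CZ}}\big[(\beta^1;i),(\gamma^1;j)\big]^{\int_{\mathcal{M}^3}\alpha^1\cup\beta^1\cup\gamma^1},$$ where $\alpha^1\in H^1(\mathcal{M}^3;\mathbb{Z}_2)$ is the Poincaré dual of $[\alpha_2]$.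
   Context: Toric code copy $k$: one qubit $q^{(k)}_e$ per edge; $X$-stabilizers $\prod_{e\ni v}X^{(k)}_e$ on vertices; $Z$-stabilizers $\prod_{e\subset f}Z^{(k)}_e$ on triangles. The $\{0,1\}$-valued operator cochain $a^{(k)}$ satisfies $(-1)^{a^{(k)}(e)}=Z^{(k)}_e$; cup products on ordered simplices are $(\alpha\cup\beta)([v_0v_1v_2])=\alpha([v_0v_1])\beta([v_1v_2])$, with $v_0\prec v_1\prec v_2$ from the branching structure. On the code space $da^{(k)}=0$. Fix a basis $B^1$ of $H^1(\mathcal{M}^3;\mathbb{Z}_2)$; writing $[a^{(k)}]=\sum_{\beta}m^{(k)}_\beta\beta^1$, the logical qubit $(\beta^1;k)$ has computational basis value $m^{(k)}_\beta\in\{0,1\}$, and $\overline{\mathrm{CZ}}[(\beta^1;i),(\gamma^1;j)]$ acts as $(-1)^{m^{(i)}_\beta m^{(j)}_\gamma}$. *)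

(* Defs.v *)
From HB Require Import structures.
From mathcomp Require Import all_boot all_order all_algebra all_field.
Set Implicit Arguments. Unset Strict Implicit. Unset Printing Implicit Defensive.
Import GRing.Theory Num.Theory.

Section Defs.
Variable V : finType.
Implicit Types (K L : {set {set V}}) (br : rel V).

Definition simplicial_complex K : bool :=
  [forall s in K, (s != set0) &&
     [forall t : {set V}, ((t \subset s) && (t != set0)) ==> (t \in K)]].

Definition all_vertices K : bool := [forall v : V, [set v] \in K].

Definition nsimplices K (k : nat) : {set {set V}} := [set s in K | #|s| == k.+1].

Definition pure K (d : nat) : bool :=
  [forall s in K, (#|s| <= d.+1) && [exists t in K, (#|t| == d.+1) && (s \subset t)]].

Definition link K (v : V) : {set {set V}} :=
  [set s in K | (v \notin s) && ((v |: s) \in K)].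

Definition skel_rel K : rel V := fun x y => [set x; y] \in K.
Definition connected_cx K : bool :=
  [forall x, forall y, (([set x] \in K) && ([set y] \in K)) ==> connect (skel_rel K) x y].

(* closed (triangulated) surface: pure 2-dim, every edge in exactly two
   triangles, every vertex link connected (hence a circle) *)
Definition closed_surface L : bool :=
  [&& pure L 2,
      [forall e in nsimplices L 1,
         #|[set t in nsimplices L 2 | e \subset t]| == 2] &
      [forall w : V, ([set w] \in L) ==> connected_cx (link L w)]].

(* triangulated 2-sphere: connected closed surface with Euler characteristic 2 *)
Definition sphere2 L : bool :=
  [&& closed_surface L, connected_cx L &
      #|nsimplices L 0| + #|nsimplices L 2| == #|nsimplices L 1| + 2].

(* triangulation of a closed 3-manifold (combinatorial: vertex links are 2-spheres;
   in dimension 3 every triangulation is combinatorial) *)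
Definition closed_3manifold K : bool :=
  [&& simplicial_complex K, all_vertices K, pure K 3 &
      [forall v : V, sphere2 (link K v)]].

Definition branching K br : Prop :=
  (forall u v, u != v -> [set u; v] \in K -> br u v != br v u) /\
  (forall u v w, [set u; v; w] \in K -> #|[set u; v; w]| = 3 ->
      ~~ [&& br u v, br v w & br w u]).

(* ordered triangles [v0 v1 v2] and tetrahedra [v0 v1 v2 v3], v0 < v1 < ... *)
Definition otri K br (x : V * V * V) : bool :=
  let '(v0, v1, v2) := x in
  [&& [set v0; v1; v2] \in K, #|[set v0; v1; v2]| == 3, br v0 v1 & br v1 v2].
Definition otet K br (x : V * V * V * V) : bool :=
  let '(v0, v1, v2, v3) := x in
  [&& [set v0; v1; v2; v3] \in K, #|[set v0; v1; v2; v3]| == 4,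
      br v0 v1, br v1 v2 & br v2 v3].

(* ---------- Z2 cochains (values on edges = 2-element simplices) ---------- *)
Definition cochain1 := {set V} -> bool.

Definition d0 (l : V -> bool) : cochain1 := fun e => \big[addb/false]_(v in e) l v.
Definition d1 (a : cochain1) (t : {set V}) : bool :=
  \big[addb/false]_(e : {set V} | (e \subset t) && (#|e| == 2)) a e.

Definition cocycle1 K (a : cochain1) : Prop :=
  forall t, t \in K -> #|t| = 3 -> d1 a t = false.

Definition cohomologous K (a b : cochain1) : bool :=
  [exists l : {ffun V -> bool},
     [forall e : {set V}, ((e \in K) && (#|e| == 2)) ==> (a e (+) b e == d0 l e)]].

Definition lincomb n (beta : 'I_n -> cochain1) (m : {ffun 'I_n -> bool}) : cochain1 :=
  fun e => \big[addb/false]_(l | m l) beta l e.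

(* the classes of beta_0..beta_{n-1} form a basis B^1 of H^1(M;Z2) *)
Definition cohom_basis K n (beta : 'I_n -> cochain1) : Prop :=
  [/\ forall l, cocycle1 K (beta l),
      forall a, cocycle1 K a -> exists m, cohomologous K a (lincomb beta m) &
      forall m, cohomologous K (lincomb beta m) (fun _ => false) -> forall l, m l = false].

Definition coord K n (beta : 'I_n -> cochain1) (a : cochain1) : {ffun 'I_n -> bool} :=
  odflt [ffun=> false] [pick m | cohomologous K a (lincomb beta m)].

Definition cycle2 K (al2 : {set {set V}}) : Prop :=
  (forall t, t \in al2 -> (t \in K) && (#|t| == 3)) /\
  (forall e, e \in K -> #|e| = 2 -> ~~ odd #|[set t in al2 | e \subset t]|).

(* cap product with the Z2 fundamental class: (a ∩ [M]) ([v1v2v3]) =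
   sum over tetrahedra [v0v1v2v3] of a([v0v1]) *)
Definition capM K br (a : cochain1) (t : {set V}) : bool :=
  \big[addb/false]_(x : V * V * V * V)
     (let '(v0, v1, v2, v3) := x in
      [&& otet K br x, [set v1; v2; v3] == t & a [set v0; v1]]).

Definition bd3 K (c : {set {set V}}) (t : {set V}) : bool :=
  odd #|[set s in c | [&& s \in K, #|s| == 4 & t \subset s]]|.

(* a1 is a cocycle representing the Poincare dual of [al2]:
   a1 ∩ [M] is homologous to al2 *)
Definition poincare_dual K br (a1 : cochain1) (al2 : {set {set V}}) : Prop :=
  cocycle1 K a1 /\
  exists c : {set {set V}}, forall t, t \in K -> #|t| = 3 ->
    (t \in al2) (+) capM K br a1 t = bd3 K c t.

(* \int_M a ∪ b ∪ c *)
Definition int3 K br (a b c : cochain1) : bool :=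
  \big[addb/false]_(x : V * V * V * V)
     (let '(v0, v1, v2, v3) := x in
      [&& otet K br x, a [set v0; v1], b [set v1; v2] & c [set v2; v3]]).

Definition edge K := {e : {set V} | (e \in K) && (#|e| == 2)}.
(* computational basis configuration: a^(k)(e) for copy k and edge e *)
Definition config K := {ffun 'I_3 -> {ffun edge K -> bool}}.
Definition state K := config K -> algC.
Definition op K := state K -> state K.

Definition cv K (c : {ffun edge K -> bool}) : cochain1 :=
  fun s => match (insub s : option (edge K)) with Some e => c e | None => false end.

Definition sgn (b : bool) : algC := ((-1) ^+ b)%R.

Definition flipv K (k : 'I_3) (v : V) (a : config K) : config K :=
  [ffun k' => if k' == k then [ffun e => a k' e (+) (v \in val e)] else a k'].

(* X-stabilizer prod_{e ∋ v} X^(k)_e  and  Z-stabilizer prod_{e ⊂ t} Z^(k)_e *)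
Definition Xstab K (k : 'I_3) (v : V) : op K := fun psi a => psi (flipv k v a).
Definition Zstab K (k : 'I_3) (t : {set V}) : op K :=
  fun psi a => (sgn (d1 (cv (a k)) t) * psi a)%R.

Definition code_space K (psi : state K) : Prop :=
  forall k : 'I_3,
    (forall v, Xstab k v psi =1 psi) /\
    (forall t, t \in K -> #|t| = 3 -> Zstab k t psi =1 psi).

Definition CZ K (q q' : 'I_3 * {set V}) : op K :=
  fun psi a => (sgn (cv (a q.1) q.2 && cv (a q'.1) q'.2) * psi a)%R.

Definition opprod K (T : Type) (s : seq T) (F : T -> op K) : op K :=
  foldr (fun x f => fun psi => F x (f psi)) id s.

Definition Uprime K br (al2 : {set {set V}}) (i j : 'I_3) : op K :=
  opprod [seq x <- enum {: V * V * V} |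
            otri K br x && (let '(v0, v1, v2) := x in [set v0; v1; v2] \in al2)]
         (fun x => let '(v0, v1, v2) := x in @CZ K (i, [set v0; v1]) (j, [set v1; v2])).

Definition CZbar K n (beta : 'I_n -> cochain1) (i j : 'I_3) (l l' : 'I_n) : op K :=
  fun psi a => (sgn (coord K beta (cv (a i)) l && coord K beta (cv (a j)) l') * psi a)%R.

Definition logical_rhs K br n (beta : 'I_n -> cochain1) (a1 : cochain1) (i j : 'I_3) : op K :=
  opprod (enum {: 'I_n * 'I_n})
    (fun p => if int3 K br a1 (beta p.1) (beta p.2) then @CZbar K n beta i j p.1 p.2 else id).

End Defs.

(* Main.v *)
Require Import Defs.
From HB Require Import structures.
From mathcomp Require Import all_boot all_order all_algebra all_field.
Set Implicit Arguments. Unset Strict Implicit. Unset Printing Implicit Defensive.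

Section Comb.
Variable V : finType.

Lemma set3_uniq (a b c : V) : #|[set a; b; c]| = 3 -> [&& a != b, a != c & b != c].
Proof.
have -> : [set a; b; c] = [set x in [:: a; b; c]] by apply/setP=> z; rewrite !inE !orbA.
rewrite cardsE => /card_uniqP /=; rewrite !inE negb_or => /andP[/andP[-> ->]].
by rewrite andbT => ->.
Qed.

Lemma set4_uniq (a b c d : V) : #|[set a; b; c; d]| = 4 ->
  [&& a != b, a != c, a != d, b != c, b != d & c != d].
Proof.
have -> : [set a; b; c; d] = [set x in [:: a; b; c; d]] by apply/setP=> z; rewrite !inE !orbA.
rewrite cardsE => /card_uniqP /=; rewrite !inE !negb_or.
by case/and4P=> /and3P[-> -> ->] /andP[-> ->] ->.
Qed.

Lemma card3 (a b c : V) : a != b -> a != c -> b != c -> #|[set a; b; c]| = 3.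
Proof.
move=> ab ac bc.
have -> : [set a; b; c] = [set x in [:: a; b; c]] by apply/setP=> z; rewrite !inE !orbA.
by rewrite cardsE; apply/card_uniqP; rewrite /= !inE !negb_or ab ac bc.
Qed.

Lemma iter_addb n (b : bool) : iter n (addb b) false = odd n && b.
Proof. by elim: n => //= n ->; case: b; case: (odd n). Qed.

Lemma bool_const (I : finType) (P : pred I) (b : bool) :
  \big[addb/false]_(i | P i) b = odd #|[set i | P i]| && b.
Proof.
rewrite -iter_addb -big_const; apply: eq_bigl => i; by rewrite inE.
Qed.
End Comb.

Section Comb2.
Variable V : finType.

Lemma sub_pair (e : {set V}) (x y w : V) : e \subset [set x; y; w] -> w \notin e -> e \subset [set x; y].
Proof.
move=> H wn; apply/subsetP=> z ze; move: (subsetP H z ze); rewrite !inE -!orbA.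
case/or3P=> /eqP ?; subst; rewrite ?eqxx ?orbT //.
by rewrite ze in wn.
Qed.

Lemma pair_eqS (e : {set V}) (x y : V) : x != y -> e \subset [set x; y] -> #|e| = 2 -> e = [set x; y].
Proof.
move=> xy H c; apply/eqP; rewrite eqEcard H cards2 xy c //.
Qed.

Lemma rot3 (a b c : V) : [set a; b; c] = [set b; c; a].
Proof. by apply/setP=> z; rewrite !inE; case: (z == a); case: (z == b); case: (z == c). Qed.

Lemma swap23 (a b c : V) : [set a; b; c] = [set a; c; b].
Proof. by apply/setP=> z; rewrite !inE; case: (z == a); case: (z == b); case: (z == c). Qed.
End Comb2.
Lemma pair_ne (V : finType) (x y u v : V) : y \notin [set u; v] -> [set x; y] != [set u; v].
Proof. move=> yn; apply/eqP=> E; by rewrite -E !inE eqxx orbT in yn. Qed.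

Lemma pair_ne1 (V : finType) (x y u v : V) : x \notin [set u; v] -> [set x; y] != [set u; v].
Proof. move=> yn; apply/eqP=> E; by rewrite -E !inE eqxx in yn. Qed.

Lemma d1_tri (V : finType) (f : cochain1 V) (a b c : V) : a != b -> a != c -> b != c ->
  d1 f [set a; b; c] = f [set a; b] (+) f [set a; c] (+) f [set b; c].
Proof.
move=> ab ac bc.
have U : uniq [:: [set a; b]; [set a; c]; [set b; c]].
  rewrite /= !inE !negb_or andbT.
  rewrite pair_ne ?pair_ne1 // !inE !negb_or ?(eq_sym c) ?(eq_sym b) ?ab ?ac ?bc // eq_sym // bc.
rewrite /d1; set L := [:: [set a; b]; [set a; c]; [set b; c]].
have -> : \big[addb/false]_(e : {set V} | (e \subset [set a; b; c]) && (#|e| == 2)) f e =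
          \big[addb/false]_(e : {set V} | e \in L) f e; last first.
  rewrite -big_uniq // !big_cons big_nil /=; by case: (f _); case: (f _); case: (f _).
apply: eq_big => // e; apply/idP/idP.
    case/andP=> H /eqP c2.
    have : ~~ ([set a; b; c] \subset e).
      apply/negP=> /subset_leq_card; rewrite c2 card3 //.
    case/subsetPn=> z; rewrite !inE -!orbA; case/or3P=> /eqP -> zn.
    - rewrite rot3 in H; have := pair_eqS bc (sub_pair H zn) c2; by move=> ->; rewrite eqxx ?orbT.
    - rewrite swap23 in H; have := pair_eqS ac (sub_pair H zn) c2; by move=> ->; rewrite eqxx ?orbT.
    - have := pair_eqS ab (sub_pair H zn) c2; by move=> ->; rewrite eqxx ?orbT.
  rewrite /L !inE ?orbF; case/or3P=> /eqP ->; rewrite cards2 ?ab ?ac ?bc eqxx andbT;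
  by apply/subsetP=> z /set2P[] ->; rewrite !inE eqxx ?orbT.
Qed.

Lemma sub3 (V : finType) (A : {set V}) (a b c : V) : a \in A -> b \in A -> c \in A -> [set a; b; c] \subset A.
Proof. by move=> ha hb hc; apply/subsetP=> z /setUP[/setUP[]|] /set1P ->. Qed.

Lemma sub_face (V : finType) (t A F : {set V}) (w : V) : t \subset A -> w \notin t ->
  (forall z, z \in A -> z != w -> z \in F) -> t \subset F.
Proof.
move=> tA wt H; apply/subsetP=> z zt; apply: H; first exact: (subsetP tA).
by apply: contraNneq wt => <-.
Qed.

Lemma eq_card3 (V : finType) (t F : {set V}) : t \subset F -> #|t| = 3 -> #|F| = 3 -> t = F.
Proof. by move=> tF ct cF; apply/eqP; rewrite eqEcard tF ct cF. Qed.

Lemma boolT (b01 b02 b12 c12 c13 c23 : bool) :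
  b01 (+) b02 (+) b12 = false -> c12 (+) c13 (+) c23 = false ->
  (b12 && c23) (+) ((b02 && c23) (+) ((b01 && c13) (+) ((b01 && c12) (+) false))) = false.
Proof. by case: b01; case: b02; case: b12; case: c12; case: c13; case: c23. Qed.


Definition tset (V : finType) (x : V * V * V) : {set V} :=
  let '(a, b, c) := x in [set a; b; c].

Section Geo.
Variable V : finType.
Variable K : {set {set V}}.
Variable br : rel V.
Hypothesis sc : simplicial_complex K.
Hypothesis hb : branching K br.

Lemma sc_sub (s t : {set V}) : s \in K -> t \subset s -> t != set0 -> t \in K.
Proof.
move=> sK ts t0; move/forallP: sc => /(_ s); rewrite sK /= => /andP[_ /forallP /(_ t)].
by rewrite ts t0.
Qed.

Lemma br_anti (u v : V) : u != v -> [set u; v] \in K -> br v u = ~~ br u v.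
Proof. by move=> uv e; have := hb.1 u v uv e; case: (br u v); case: (br v u). Qed.

Lemma sort_order (s : {set V}) : s \in K -> exists L : seq V,
  [/\ uniq L, L =i s, size L = #|s| & sorted br L].
Proof.
move=> sK.
pose r := fun u v => if [&& u \in s, v \in s & u != v] then br u v else true.
have rt : total r.
  move=> u v; rewrite /r.
  case: (boolP (u \in s)) => //= us; case: (boolP (v \in s)) => //= vs.
  case: eqVneq => //= uv; rewrite (br_anti uv) ?orbN //.
  apply: (sc_sub sK); last by apply/set0Pn; exists u; rewrite !inE eqxx.
  by apply/subsetP=> z; rewrite !inE => /orP[] /eqP ->.
exists (sort r (enum s)); split.
- by rewrite sort_uniq enum_uniq.
- by move=> z; rewrite mem_sort mem_enum.
- by rewrite size_sort cardE.
have : all (mem s) (sort r (enum s)) by apply/allP=> z; rewrite mem_sort mem_enum.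
have : uniq (sort r (enum s)) by rewrite sort_uniq enum_uniq.
have := sort_sorted rt (enum s).
elim: (sort r (enum s)) => // x [|y L] IH //= /andP[rxy pyL] /andP[xn u] /andP[xs al].
apply/andP; split; last by apply: IH => //; case/andP: al.
case/andP: al => ys _; move: rxy; rewrite /r xs ys /=.
by have -> : x != y by apply: contra xn; move/eqP->; rewrite inE eqxx.
Qed.

Lemma tri_order (t : {set V}) : t \in K -> #|t| = 3 -> exists x, otri K br x && (tset x == t).
Proof.
move=> tK t3; have [L [uL mL sL soL]] := sort_order tK.
move: uL mL sL soL; case: L => [|a [|b [|c [|d L]]]] //=; rewrite t3 // => _ mL _ /and3P[ab bc _].
have E : [set a; b; c] = t by apply/setP=> z; rewrite -mL !inE !orbA ?orbF.
exists (a, b, c); by rewrite /= E tK t3 !eqxx ab bc.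
Qed.

Lemma tet_order (s : {set V}) : s \in K -> #|s| = 4 ->
  exists y : V * V * V * V, otet K br y && (let '(a, b, c, d) := y in [set a; b; c; d] == s).
Proof.
move=> tK t3; have [L [uL mL sL soL]] := sort_order tK.
move: uL mL sL soL; case: L => [|a [|b [|c [|d [|e L]]]]] //=; rewrite t3 // => _ mL _ /and4P[ab bc cd _].
have E : [set a; b; c; d] = s by apply/setP=> z; rewrite -mL !inE !orbA ?orbF.
exists (a, b, c, d); by rewrite /= E tK t3 !eqxx ab bc cd.
Qed.


Lemma otri_br02 (a b c : V) : otri K br (a, b, c) -> br a c.
Proof.
case/and4P=> tK /eqP t3 ab bc.
have := hb.2 a b c tK t3; rewrite ab bc /= => nca.
case/and3P: (set3_uniq t3) => _ ac _.
have e : [set a; c] \in K.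
  apply: (sc_sub tK); first by apply/subsetP=> z; rewrite !inE => /orP[] ->; rewrite ?orbT.
  by apply/set0Pn; exists a; rewrite !inE eqxx.
by move: (br_anti ac e); rewrite (negbTE nca); case: (br a c).
Qed.

Lemma otri_facts (a b c : V) : otri K br (a, b, c) ->
  [/\ [set a; b; c] \in K, [&& a != b, a != c & b != c],
      [&& br a b, br b c & br a c] & [&& ~~ br b a, ~~ br c b & ~~ br c a]].
Proof.
move=> o; have ac := otri_br02 o; case/and4P: o => tK /eqP t3 ab bc.
have D := set3_uniq t3; case/and3P: (D) => dab dac dbc.
have sub2 : forall u v, u \in [set a; b; c] -> v \in [set a; b; c] -> [set u; v] \in K.
  move=> u v uin vin; apply: (sc_sub tK).
    by apply/subsetP=> z /set2P[] ->.
  by apply/set0Pn; exists u; rewrite !inE eqxx.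
split=> //; first by rewrite ab bc ac.
rewrite (br_anti dab) ?(br_anti dbc) ?(br_anti dac) ?ab ?bc ?ac ?sub2 //; by rewrite !inE eqxx ?orbT.
Qed.

Lemma otri_uniq (x x' : V * V * V) : otri K br x -> otri K br x' -> tset x = tset x' -> x = x'.
Proof.
case: x => [[a b] c]; case: x' => [[a' b'] c'] o o' /= E.
case: (otri_facts o) => _ _ _ /and3P[ba cb ca].
case: (otri_facts o') => _ /and3P[d1 d2 d3] /and3P[ab' bc' ac'] _.
have ma : a' \in [set a; b; c] by rewrite E !inE eqxx.
have mb : b' \in [set a; b; c] by rewrite E !inE eqxx ?orbT.
have mc : c' \in [set a; b; c] by rewrite E !inE eqxx ?orbT.
rewrite !inE -!orbA in ma mb mc.
case/or3P: ma => /eqP ?; case/or3P: mb => /eqP ?; case/or3P: mc => /eqP ?; subst => //;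
  by move: d1 d2 d3 ab' bc' ac'; rewrite ?eqxx ?(negbTE ba) ?(negbTE cb) ?(negbTE ca).
Qed.


Lemma edgeK (s : {set V}) (u v : V) : s \in K -> u \in s -> v \in s -> [set u; v] \in K.
Proof.
move=> sK us vs; apply: (sc_sub sK); first by apply/subsetP=> z /set2P[] ->.
by apply/set0Pn; exists u; rewrite !inE eqxx.
Qed.

Lemma tri_sum (P : pred {set V}) (F : {set V} -> bool) :
  \big[addb/false]_(x | otri K br x && P (tset x)) F (tset x) =
  \big[addb/false]_(t | [&& P t, t \in K & #|t| == 3]) F t.
Proof.
rewrite (partition_big (@tset V) (fun t => [&& P t, t \in K & #|t| == 3])); last first.
  move=> [[a b] c] /andP[o Px]; case: (otri_facts o) => tK D _ _.
  by rewrite Px tK /= card3 //; case/and3P: D.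
apply: eq_bigr => t /and3P[Pt tK /eqP t3].
have [x0 /andP[o0 /eqP e0]] := tri_order tK t3.
rewrite (big_pred1 x0) ?e0 // => x /=.
apply/idP/eqP.
  case/andP=> /andP[o _] /eqP e; apply: otri_uniq o o0 _; by rewrite e e0.
by move=> ->; rewrite o0 e0 Pt eqxx.
Qed.


Definition fof (h : V -> V -> bool) : cochain1 V := fun e =>
  [exists p : V * V, [&& e == [set p.1; p.2], p.1 != p.2, br p.1 p.2 & h p.1 p.2]].

Lemma fofE h (u v : V) : u != v -> [set u; v] \in K -> br u v -> fof h [set u; v] = h u v.
Proof.
move=> uv eK buv; apply/existsP/idP; last by move=> huv; exists (u, v); rewrite /= eqxx uv buv huv.
case=> [[p q]] /= /and4P[/eqP E pq bpq hpq].
have : p \in [set u; v] by rewrite E !inE eqxx.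
have : q \in [set u; v] by rewrite E !inE eqxx orbT.
case/set2P=> ?; case/set2P=> ?; subst => //; first by rewrite eqxx in pq.
- by move: bpq; rewrite (br_anti uv eK) buv.
- by rewrite eqxx in pq.
Qed.

Lemma Cyc (al2 : {set {set V}}) (cy : cycle2 K al2) (h : V -> V -> bool) :
  \big[addb/false]_(x | otri K br x && (tset x \in al2))
     (let '(a, b, c) := x in h a b (+) h a c (+) h b c) = false.
Proof.
transitivity (\big[addb/false]_(x | otri K br x && (tset x \in al2)) d1 (fof h) (tset x)).
  apply: eq_bigr => [[[a b] c]] /andP[o _].
  case: (otri_facts o) => tK /and3P[ab ac bc] /and3P[bab bbc bac] _.
  by rewrite /= d1_tri // !fofE // (edgeK tK) // !inE eqxx ?orbT.
rewrite (tri_sum (fun t => t \in al2) (d1 (fof h))).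
rewrite /d1 (exchange_big_dep (fun e : {set V} => #|e| == 2)) /=; last by move=> t e _ /andP[].
apply: big1 => e e2; rewrite bool_const.
case: (boolP (e \in K)) => eK.
  have := cy.2 e eK (eqP e2).
  have -> : [set t | [&& t \in al2, t \in K & #|t| == 3] && ((e \subset t) && (#|e| == 2))] =
            [set t in al2 | e \subset t].
    apply/setP=> t; rewrite !inE e2 andbT.
    case: (boolP (t \in al2)) => //= ta; by rewrite (cy.1 t ta).
  by move/negbTE => ->.
suff -> : [set t | [&& t \in al2, t \in K & #|t| == 3] && ((e \subset t) && (#|e| == 2))] = set0
  by rewrite cards0.
apply/setP=> t; rewrite !inE; apply/negP => /andP[/and3P[_ tK _] /andP[et _]].
move: eK; rewrite (sc_sub tK et) //.
by rewrite -card_gt0 (eqP e2).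
Qed.


Definition cupx (b c : cochain1 V) (x : V * V * V) : bool :=
  let '(a0, a1, a2) := x in b [set a0; a1] && c [set a1; a2].

Definition Sal (al2 : {set {set V}}) (b c : cochain1 V) : bool :=
  \big[addb/false]_(x | otri K br x && (tset x \in al2)) cupx b c x.

Lemma boolL (b l0 l1 c01 c02 c12 : bool) : c01 (+) c02 (+) c12 = false ->
  (b (+) l0 (+) l1) && c12 = (b && c12) (+) ((l0 && c01) (+) (l0 && c02) (+) (l1 && c12)).
Proof. by case: b; case: l0; case: l1; case: c01; case: c02; case: c12. Qed.

Lemma boolR (b01 b02 b12 c l1 l2 : bool) : b01 (+) b02 (+) b12 = false ->
  b01 && (c (+) l1 (+) l2) = (b01 && c) (+) ((b01 && l1) (+) (b02 && l2) (+) (b12 && l2)).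
Proof. by case: b01; case: b02; case: b12; case: c; case: l1; case: l2. Qed.

Lemma cocycle_tri (c : cochain1 V) (a0 a1 a2 : V) : cocycle1 K c -> otri K br (a0, a1, a2) ->
  c [set a0; a1] (+) c [set a0; a2] (+) c [set a1; a2] = false.
Proof.
move=> cc o; case: (otri_facts o) => tK /and3P[ab ac bc] _ _.
by rewrite -d1_tri // cc // card3.
Qed.

Lemma InvL (al2 : {set {set V}}) (cy : cycle2 K al2) (b b' c : cochain1 V) (l : V -> bool) :
  cocycle1 K c ->
  (forall u v, u != v -> [set u; v] \in K -> b' [set u; v] = b [set u; v] (+) l u (+) l v) ->
  Sal al2 b' c = Sal al2 b c.
Proof.
move=> cc hb'; rewrite -[RHS]addbF -(Cyc cy (fun u v => l u && c [set u; v])) /Sal.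
rewrite -big_split.
apply: eq_bigr => [[[a0 a1] a2]] /andP[o _] /=.
case: (otri_facts o) => tK /and3P[ab ac bc] _ _.
rewrite hb' ?(edgeK tK) ?inE ?eqxx ?orbT //.
exact: boolL (cocycle_tri cc o).
Qed.

Lemma InvR (al2 : {set {set V}}) (cy : cycle2 K al2) (b c c' : cochain1 V) (l : V -> bool) :
  cocycle1 K b ->
  (forall u v, u != v -> [set u; v] \in K -> c' [set u; v] = c [set u; v] (+) l u (+) l v) ->
  Sal al2 b c' = Sal al2 b c.
Proof.
move=> cc hc'; rewrite -[RHS]addbF -(Cyc cy (fun u v => b [set u; v] && l v)) /Sal.
rewrite -big_split.
apply: eq_bigr => [[[a0 a1] a2]] /andP[o _] /=.
case: (otri_facts o) => tK /and3P[ab ac bc] _ _.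
rewrite hc' ?(edgeK tK) ?inE ?eqxx ?orbT //.
exact: boolR (cocycle_tri cc o).
Qed.


Ltac face_tac := move=> z; rewrite !inE -!orbA; case/or4P=> /eqP -> ; rewrite ?eqxx ?orbT //= => _ ; by rewrite ?eqxx ?orbT.

Definition tset4 (y : V * V * V * V) : {set V} := let '(a, b, c, d) := y in [set a; b; c; d].

Lemma otet_faces (y0 y1 y2 y3 : V) : otet K br (y0, y1, y2, y3) ->
  [/\ otri K br (y1, y2, y3), otri K br (y0, y2, y3), otri K br (y0, y1, y3)
    & otri K br (y0, y1, y2)].
Proof.
case/and5P=> sK /eqP s4 b01 b12 b23.
case/and3P: (set4_uniq s4) => d01 d02 /and4P[d03 d12 d13 d23].
have T : forall a b c, a \in [set y0; y1; y2; y3] -> b \in [set y0; y1; y2; y3] ->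
    c \in [set y0; y1; y2; y3] -> [set a; b; c] \in K.
  move=> a b c ha hb0 hc; apply: (sc_sub sK); last by apply/set0Pn; exists a; rewrite !inE eqxx.
  exact: sub3.
have M : [/\ y0 \in [set y0; y1; y2; y3], y1 \in [set y0; y1; y2; y3],
            y2 \in [set y0; y1; y2; y3] & y3 \in [set y0; y1; y2; y3]].
  by split; rewrite !inE eqxx ?orbT.
case: M => m0 m1 m2 m3.
have o012 : otri K br (y0, y1, y2) by rewrite /= T // card3 // eqxx b01 b12.
have o123 : otri K br (y1, y2, y3) by rewrite /= T // card3 // eqxx b12 b23.
have b02 := otri_br02 o012; have b13 := otri_br02 o123.
split=> //.
  by rewrite /= T // card3 // eqxx b02 b23.
by rewrite /= T // card3 // eqxx b01 b13.
Qed.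


Lemma tet_sum (b c : cochain1 V) (s : {set V}) : cocycle1 K b -> cocycle1 K c ->
  s \in K -> #|s| = 4 ->
  \big[addb/false]_(x | otri K br x && (tset x \subset s)) cupx b c x = false.
Proof.
move=> cb cc sK s4.
have [[[[y0 y1] y2] y3] /andP[oy /eqP ey]] := tet_order sK s4; subst s.
case: (otet_faces oy) => o0 o1 o2 o3.
case/and3P: (set4_uniq s4) => d01 d02 /and4P[d03 d12 d13 d23].
set L := [:: (y1, y2, y3); (y0, y2, y3); (y0, y1, y3); (y0, y1, y2)].
have UL : uniq L.
  rewrite /L /= !inE !xpair_eqE.
  by rewrite (eq_sym y1) (negbTE d01) (eq_sym y2) (negbTE d12) (eq_sym y3) (negbTE d23) /= !andbF.
have P : forall x, otri K br x && (tset x \subset [set y0; y1; y2; y3]) = (x \in L).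
  move=> [[a b0] c0]; apply/idP/idP.
    case/andP=> ox sx; have c3 : #|[set a; b0; c0]| = 3 by case/and4P: ox => _ /eqP.
    have : ~~ ([set y0; y1; y2; y3] \subset [set a; b0; c0]).
      by apply/negP => /subset_leq_card; rewrite c3 s4.
    case/subsetPn=> z zs zn; rewrite !inE -!orbA in zs.
    case/or4P: zs => /eqP ?; subst z.
    - have E : tset (a, b0, c0) = [set y1; y2; y3].
        apply: eq_card3 (card3 d12 d13 d23) => //; apply: (sub_face sx zn); face_tac.
      by rewrite (otri_uniq ox o0 E) !inE eqxx.
    - have E : tset (a, b0, c0) = [set y0; y2; y3].
        apply: eq_card3 (card3 d02 d03 d23) => //; apply: (sub_face sx zn); face_tac.
      by rewrite (otri_uniq ox o1 E) !inE eqxx ?orbT.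
    - have E : tset (a, b0, c0) = [set y0; y1; y3].
        apply: eq_card3 (card3 d01 d03 d13) => //; apply: (sub_face sx zn); face_tac.
      by rewrite (otri_uniq ox o2 E) !inE eqxx ?orbT.
    - have E : tset (a, b0, c0) = [set y0; y1; y2].
        apply: eq_card3 (card3 d01 d02 d12) => //; apply: (sub_face sx zn); face_tac.
      by rewrite (otri_uniq ox o3 E) !inE eqxx ?orbT.
  rewrite /L !inE ?orbF; case/or4P=> /eqP [-> -> ->]; rewrite ?o0 ?o1 ?o2 ?o3 /=;
    by apply: sub3; rewrite !inE eqxx ?orbT.
rewrite (eq_bigl (fun x => x \in L)) //.
rewrite -big_uniq // !big_cons big_nil /=.
exact: boolT (cocycle_tri cb o3) (cocycle_tri cc o0).
Qed.

Lemma partA (a1 b c : cochain1 V) :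
  \big[addb/false]_(x | otri K br x) (capM K br a1 (tset x) && cupx b c x) = int3 K br a1 b c.
Proof.
rewrite /capM; under eq_bigr => x _ do rewrite big_distrl.
rewrite exchange_big /int3; apply: eq_bigr => [[[[y0 y1] y2] y3]] _.
case: (boolP (otet K br (y0, y1, y2, y3))) => oy; last first.
  by rewrite big1.
case: (otet_faces oy) => o0 _ _ _.
rewrite /= (bigD1 (y1, y2, y3)) //= big1 ?addbF.
  by rewrite eqxx.
move=> x /andP[ox nx].
suff -> : ([set y1; y2; y3] == tset x) = false by [].
apply/negbTE; apply: contra nx => /eqP E; apply/eqP; exact: otri_uniq ox o0 (esym E).
Qed.

Lemma partB (C : {set {set V}}) (b c : cochain1 V) : cocycle1 K b -> cocycle1 K c ->
  \big[addb/false]_(x | otri K br x) (bd3 K C (tset x) && cupx b c x) = false.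
Proof.
move=> cb cc; rewrite /bd3; under eq_bigr => x _ do rewrite -bool_const.
rewrite (exchange_big_dep (fun s : {set V} => [&& s \in C, s \in K & #|s| == 4])) /=; last first.
  by move=> x s _ /andP[-> /and3P[-> -> _]].
apply: big1 => s /and3P[sC sK /eqP s4].
transitivity (\big[addb/false]_(x | otri K br x && (tset x \subset s)) cupx b c x);
  last exact: tet_sum.
apply: eq_bigl => x; by rewrite sC sK s4 eqxx.
Qed.

Lemma PD (al2 : {set {set V}}) (a1 b c : cochain1 V) : cocycle1 K b -> cocycle1 K c ->
  poincare_dual K br a1 al2 -> Sal al2 b c = int3 K br a1 b c.
Proof.
move=> cb cc [_ [C HC]].
transitivity (\big[addb/false]_(x | otri K br x) (capM K br a1 (tset x) && cupx b c x) (+)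
  \big[addb/false]_(x | otri K br x) (bd3 K C (tset x) && cupx b c x)); last first.
  by rewrite partA partB // addbF.
rewrite -big_split /Sal big_mkcondr /=.
apply: eq_bigr => [[[x0 x1] x2]] ox.
case: (otri_facts ox) => tK /and3P[d01 d02 d12] _ _.
move: (HC _ tK (card3 d01 d02 d12)) => /=.
case: (_ \in al2); case: (capM _ _ _ _); case: (bd3 _ _ _); case: (b _); by case: (c _).
Qed.

End Geo.


Section Sgn.
Import GRing.Theory Num.Theory.
Local Open Scope ring_scope.
Lemma sgnD (a b : bool) : sgn (a (+) b) = sgn a * sgn b.
Proof. by case: a; case: b; rewrite /sgn /= ?expr0 ?expr1 ?mulr1 ?mul1r ?mulrNN ?mulr1. Qed.

Lemma sgn_eq (b : bool) (x : algC) : sgn b * x = x -> b -> x = 0.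
Proof.
move=> H bt; move: H; rewrite bt /sgn expr1 mulN1r => /eqP.
rewrite -subr_eq0 -opprD oppr_eq0 -mulr2n mulrn_eq0 /= => /eqP //.
Qed.

Lemma opprod_diag (V : finType) (K : {set {set V}}) (T : Type) (s : seq T)
  (F : T -> op K) (g : T -> config K -> bool) :
  (forall x psi a, F x psi a = sgn (g x a) * psi a) ->
  forall psi a, opprod s F psi a = sgn (\big[addb/false]_(x <- s) g x a) * psi a.
Proof.
move=> HF psi a; elim: s => [|x s IH] /=.
  by rewrite big_nil /sgn expr0 mul1r.
by rewrite HF IH big_cons sgnD mulrA.
Qed.

End Sgn.

Section Q.
Import GRing.Theory Num.Theory.
Local Open Scope ring_scope.
Variable V : finType.
Variable K : {set {set V}}.
Variable br : rel V.

Lemma UprimeE (al2 : {set {set V}}) (i j : 'I_3) (psi : state K) (a : config K) :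
  Uprime br al2 i j psi a = sgn (Sal K br al2 (cv (a i)) (cv (a j))) * psi a.
Proof.
rewrite /Uprime (@opprod_diag _ _ _ _ _ (fun x a => cupx (cv (a i)) (cv (a j)) x)).
  by rewrite big_filter /Sal big_enum_cond; congr (sgn _ * _); apply: eq_bigl => -[[x0 x1] x2].
by move=> [[x0 x1] x2] psi' a'.
Qed.

Lemma logical_rhsE n (beta : 'I_n -> cochain1 V) (a1 : cochain1 V) (i j : 'I_3)
  (psi : state K) (a : config K) :
  logical_rhs br beta a1 i j psi a =
  sgn (\big[addb/false]_(p : 'I_n * 'I_n) (int3 K br a1 (beta p.1) (beta p.2) &&
        (Defs.coord K beta (cv (a i)) p.1 && Defs.coord K beta (cv (a j)) p.2))) * psi a.
Proof.
rewrite /logical_rhs (@opprod_diag _ _ _ _ _ (fun p a => int3 K br a1 (beta p.1) (beta p.2) &&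
        (Defs.coord K beta (cv (a i)) p.1 && Defs.coord K beta (cv (a j)) p.2))).
  by rewrite big_enum_cond.
move=> p psi' a'; case: (int3 _ _ _ _ _) => //=.
by rewrite /sgn expr0 mul1r.
Qed.

Lemma mem2_xor (u w v : V) : u != w -> (v \in [set u; w]) = (u == v) (+) (w == v).
Proof.
move=> uw; have : ~~ ((u == v) && (w == v)).
  by apply/andP => -[/eqP uv /eqP wv]; rewrite uv wv eqxx in uw.
by rewrite !inE (eq_sym v u) (eq_sym v w); case: (u == v); case: (w == v).
Qed.

Lemma cs_cocycle (psi : state K) (a : config K) (k : 'I_3) :
  code_space psi -> psi a != 0 -> cocycle1 K (cv (a k)).
Proof.
move=> cs nz t tK t3; apply/negbTE/negP => d.
by move: nz; rewrite (sgn_eq ((cs k).2 t tK t3 a) d) eqxx.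
Qed.

Lemma cv_flip (k k' : 'I_3) (v : V) (a : config K) (u w : V) : u != w -> [set u; w] \in K ->
  cv ((flipv k v a) k') [set u; w] =
  cv (a k') [set u; w] (+) ((k' == k) && (u == v)) (+) ((k' == k) && (w == v)).
Proof.
move=> uw eK; have P : ([set u; w] \in K) && (#|[set u; w]| == 2) by rewrite eK cards2 uw.
rewrite /cv; case: insubP => [e _ ev|]; last by rewrite P.
rewrite /flipv ffunE; case: eqVneq => kk /=; last by rewrite !addbF.
by rewrite ffunE ev -addbA mem2_xor.
Qed.

Lemma d0_pair (l : V -> bool) (u w : V) : u != w -> d0 l [set u; w] = l u (+) l w.
Proof. by move=> uw; rewrite /d0 big_setU1 ?big_set1 // inE. Qed.

Lemma coh_edge (a b : cochain1 V) : cohomologous K a b -> exists l : V -> bool,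
  forall u w, u != w -> [set u; w] \in K -> b [set u; w] = a [set u; w] (+) l u (+) l w.
Proof.
case/existsP => l /forallP H; exists l => u w uw eK; move: (H [set u; w]).
rewrite eK cards2 uw /= d0_pair // -addbA => /eqP <-.
by case: (a _); case: (b _).
Qed.

Hypothesis sc : simplicial_complex K.
Hypothesis hb : branching K br.

Lemma coh_cocycle (a b : cochain1 V) (l : V -> bool) : cocycle1 K a ->
  (forall u w, u != w -> [set u; w] \in K -> b [set u; w] = a [set u; w] (+) l u (+) l w) ->
  cocycle1 K b.
Proof.
move=> ca H t tK t3; have [[[x0 x1] x2] /andP[o /eqP E]] := tri_order sc hb tK t3.
rewrite -E /=; case: (otri_facts sc hb o) => xK /and3P[d01 d02 d12] _ _.
have := ca _ xK (card3 d01 d02 d12); rewrite !d1_tri // !H ?(edgeK sc xK) ?inE ?eqxx ?orbT //.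
by case: (a _); case: (a _); case: (a _); case: (l _); case: (l _); case: (l _).
Qed.

Lemma coordP n (beta : 'I_n -> cochain1 V) (a : cochain1 V) :
  cohom_basis K beta -> cocycle1 K a -> cohomologous K a (lincomb beta (Defs.coord K beta a)).
Proof.
case=> _ H2 _ ca; rewrite /Defs.coord; case: pickP => [m //|none].
by have [m Hm] := H2 a ca; rewrite none in Hm.
Qed.

Lemma int3_bilin n (beta : 'I_n -> cochain1 V) (a1 : cochain1 V) (m m' : {ffun 'I_n -> bool}) :
  int3 K br a1 (lincomb beta m) (lincomb beta m') =
  \big[addb/false]_(p : 'I_n * 'I_n) (int3 K br a1 (beta p.1) (beta p.2) && (m p.1 && m' p.2)).
Proof.
have Lc : forall (mm : {ffun 'I_n -> bool}) e,
    lincomb beta mm e = \big[addb/false]_l (mm l && beta l e).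
  by move=> mm e; rewrite /lincomb big_mkcond; apply: eq_bigr => l _; case: (mm l).
rewrite /int3; symmetry; under eq_bigr => p _ do rewrite big_distrl.
rewrite exchange_big; symmetry; apply: eq_bigr => [[[[y0 y1] y2] y3]] _ /=.
rewrite !Lc -(pair_big xpredT xpredT (fun l l' =>
   [&& otet K br (y0, y1, y2, y3), a1 [set y0; y1], beta l [set y1; y2] & beta l' [set y2; y3]]
   && (m l && m' l'))) /=.
rewrite big_distrlr !big_distrr /=; apply: eq_bigr => l _; rewrite big_distrr /=.
rewrite big_distrr /=; apply: eq_bigr => l2 _.
by case: (a1 _); case: (m l); case: (m' l2); case: (beta l _); case: (beta l2 _); rewrite /= ?andbT ?andbF.
Qed.
End Q.

Unset Implicit Arguments. Set Strict Implicit.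

Theorem mainTheorem3 (V : finType) (K : {set {set V}}) (br : rel V)
  (n : nat) (beta : 'I_n -> cochain1 V)
  (al2 : {set {set V}}) (a1 : cochain1 V) (i j : 'I_3) :
  closed_3manifold K -> branching K br -> cohom_basis K beta ->
  cycle2 K al2 -> poincare_dual K br a1 al2 -> i != j ->
  (forall psi : state K, code_space psi -> code_space (Uprime br al2 i j psi)) /\
  (forall psi : state K, code_space psi ->
     Uprime br al2 i j psi =1 logical_rhs br beta a1 i j psi).
Proof.
move=> hM hb hB cy pd ij.
have sc : simplicial_complex K by case/and4P: hM.
split.
- move=> psi cs k; split.
  + move=> v a; rewrite /Xstab !UprimeE.
    have ha : psi (flipv k v a) = psi a := (cs k).1 v a.
    rewrite ha; case: (eqVneq (psi a) 0%R) => [->|nz]; first by rewrite !GRing.mulr0.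
    have nz' : psi (flipv k v a) != 0%R by rewrite ha.
    congr (sgn _ * _)%R.
    rewrite (InvL sc hb cy (b := cv (a i)) (l := fun x => (i == k) && (x == v))
               (cs_cocycle j cs nz')); last by move=> u w uw eK; rewrite cv_flip.
    rewrite (InvR sc hb cy (c := cv (a j)) (l := fun x => (j == k) && (x == v))
               (cs_cocycle i cs nz)) //.
    by move=> u w uw eK; rewrite cv_flip.
  + move=> t tK t3 a; rewrite /Zstab !UprimeE GRing.mulrCA.
    by have := (cs k).2 t tK t3 a; rewrite /Zstab => ->.
- move=> psi cs a; rewrite UprimeE logical_rhsE.
  case: (eqVneq (psi a) 0%R) => [->|nz]; first by rewrite !GRing.mulr0.
  congr (sgn _ * _)%R.
  have cci := cs_cocycle i cs nz; have ccj := cs_cocycle j cs nz.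
  have [li Hi] := coh_edge (coordP hB cci); have [lj Hj] := coh_edge (coordP hB ccj).
  have cBi := coh_cocycle sc hb cci Hi; have cBj := coh_cocycle sc hb ccj Hj.
  rewrite -(InvL sc hb cy ccj Hi) -(InvR sc hb cy cBi Hj) (PD sc hb cBi cBj pd).
  by rewrite int3_bilin.
Qed.
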